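(* Let $W$ and $V$ be B-DMCs which are symmetric, symmetrized under the same permutation. Then for every $N=2^n$ and $i\in\{1,\dots,N\}$, $Z_{2N}^{(2i)}(W,V)=\big(Z_N^{(i)}(W,V)\big)^2$. Consequently, $Z_N^{(i)}(W,V)-Z_N^{(i)}(V)\le0$ implies $Z_{2N}^{(2i)}(W,V)-Z_{2N}^{(2i)}(V)\le0$.
   Context: A B-DMC $W:\{0,1\}\to\mathcal Y$ is given by transition probabilities $W(y|x)$, $\mathcal Y$ finite; $L_W(y)=W(y|1)/W(y|0)$. $W,V$ are ''symmetric, symmetrized under the same permutation'' if there is an involutive permutation $\pi$ of $\mathcal Y$ with $W(y|1)=W(\pi(y)|0)$, $V(y|1)=V(\pi(y)|0)$ for all $y$. For a B-DMC $W$: $W^-(y_1y_2|u_1)=\sum_{u_2}\tfrac12W(y_1|u_1\oplus u_2)W(y_2|u_2)$ and $W^+(y_1y_2u_1|u_2)=\tfrac12W(y_1|u_1\oplus u_2)W(y_2|u_2)$. Synthetic channels: $W_1^{(1)}=W$, $W_{2N}^{(2i-1)}=(W_N^{(i)})^-$, $W_{2N}^{(2i)}=(W_N^{(i)})^+$ (and likewise for $V$). Mismatched Bhattacharyya parameter: for B-DMCs $W,V$ on the same output alphabet $\mathcal Y$, $Z(W,V)=\sum_{y\in\mathcal Y}W(y|0)\sqrt{L_V(y)}$; $Z_N^{(i)}(W,V)=Z(W_N^{(i)},V_N^{(i)})$ and $Z_N^{(i)}(V)=Z_N^{(i)}(V,V)$. *)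

(* Defs.v *)
From HB Require Import structures.
From mathcomp Require Import all_boot all_order all_algebra.
Set Implicit Arguments. Unset Strict Implicit. Unset Printing Implicit Defensive.
Import Order.TTheory GRing.Theory Num.Theory.
Local Open Scope ring_scope.

(* A channel with input {0,1} = bool (false = 0, true = 1) and finite output
   alphabet Y is a map  W : bool -> Y -> R  with  W x y = W(y|x). *)

Definition is_BDMC (R : rcfType) (Y : finType) (W : bool -> Y -> R) : Prop :=
  (forall x y, 0 <= W x y) /\ (forall x, \sum_(y : Y) W x y = 1).

Definition sym_same_perm (R : rcfType) (Y : finType) (W V : bool -> Y -> R) : Prop :=
  exists pi : Y -> Y, involutive pi /\
    (forall y, W true y = W false (pi y)) /\ (forall y, V true y = V false (pi y)).

(* likelihood ratio L_W(y) = W(y|1)/W(y|0)  (with MathComp's convention x/0 = 0) *)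
Definition LR (R : rcfType) (Y : finType) (W : bool -> Y -> R) (y : Y) : R :=
  W true y / W false y.

Definition Zmis (R : rcfType) (Y : finType) (W V : bool -> Y -> R) : R :=
  \sum_(y : Y) W false y * Num.sqrt (LR V y).

Definition chminus (R : rcfType) (Y : finType) (W : bool -> Y -> R)
  : bool -> (Y * Y)%type -> R :=
  fun u1 y => \sum_(u2 : bool) 2^-1 * W (u1 (+) u2) y.1 * W u2 y.2.

(* W^+(y1 y2 u1 | u2) = 1/2 W(y1|u1+u2) W(y2|u2); output ((y1,y2),u1) *)
Definition chplus (R : rcfType) (Y : finType) (W : bool -> Y -> R)
  : bool -> (Y * Y * bool)%type -> R :=
  fun u2 y => 2^-1 * W (y.2 (+) u2) y.1.1 * W u2 y.1.2.

Record chpair (R : rcfType) := ChPair {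
  cp_Y : finType;
  cp_W : bool -> cp_Y -> R;
  cp_V : bool -> cp_Y -> R }.
Arguments cp_W {R} c _ _.
Arguments cp_V {R} c _ _.

Definition pminus (R : rcfType) (c : chpair R) : chpair R :=
  @ChPair R (cp_Y c * cp_Y c)%type (chminus (cp_W c)) (chminus (cp_V c)).

Definition pplus (R : rcfType) (c : chpair R) : chpair R :=
  @ChPair R (cp_Y c * cp_Y c * bool)%type (chplus (cp_W c)) (chplus (cp_V c)).

(* synth n i c = ((W_N^{(i)}), (V_N^{(i)})) for N = 2^n and 1 <= i <= N, where
   c = (W, V):  W_1^{(1)} = W, W_{2N}^{(2i-1)} = (W_N^{(i)})^-, W_{2N}^{(2i)} = (W_N^{(i)})^+. *)
Fixpoint synth (R : rcfType) (n i : nat) (c : chpair R) : chpair R :=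
  match n with
  | 0 => c
  | n'.+1 => if odd i then pminus (synth n' (i.+1)./2 c) else pplus (synth n' i./2 c)
  end.

Definition ZN (R : rcfType) (Y : finType) (W V : bool -> Y -> R) (n i : nat) : R :=
  let c := synth n i (@ChPair R Y W V) in Zmis (cp_W c) (cp_V c).

(* Main.v *)
Require Import Defs.
From HB Require Import structures.
From mathcomp Require Import all_boot all_order all_algebra.
From mathcomp Require Import ring.
Import Order.TTheory GRing.Theory Num.Theory.
Local Open Scope ring_scope.
Set Implicit Arguments. Unset Strict Implicit.

Definition Pinv (R : rcfType) (c : chpair R) : Prop :=
  (forall x y, 0 <= cp_W c x y) /\ (forall x y, 0 <= cp_V c x y) /\
  exists pi : cp_Y c -> cp_Y c, involutive pi /\
    (forall u y, cp_W c u (pi y) = cp_W c (~~ u) y) /\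
    (forall u y, cp_V c u (pi y) = cp_V c (~~ u) y).

Lemma addbN' (a b : bool) : a (+) ~~ b = ~~ (a (+) b).
Proof. by case: a; case: b. Qed.

Lemma Pinv_minus (R : rcfType) (c : chpair R) : Pinv c -> Pinv (pminus c).
Proof.
case: c => Y W V; rewrite /Pinv /= => -[W0 [V0 [pi [piK [HW HV]]]]].
split; first by move=> x y; rewrite /chminus; apply: sumr_ge0 => u _;
  rewrite mulr_ge0 ?mulr_ge0 ?invr_ge0 ?ler0n.
split; first by move=> x y; rewrite /chminus; apply: sumr_ge0 => u _;
  rewrite mulr_ge0 ?mulr_ge0 ?invr_ge0 ?ler0n.
exists (fun p => (pi p.1, p.2)); split; first by case=> a b /=; rewrite piK.
split=> u [a b]; rewrite /chminus /=; apply: eq_bigr => v _.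
  by rewrite HW addbC -addbN' addbC.
by rewrite HV addbC -addbN' addbC.
Qed.

Lemma Pinv_plus (R : rcfType) (c : chpair R) : Pinv c -> Pinv (pplus c).
Proof.
case: c => Y W V; rewrite /Pinv /= => -[W0 [V0 [pi [piK [HW HV]]]]].
split; first by move=> x y; rewrite /chplus mulr_ge0 ?mulr_ge0 ?invr_ge0 ?ler0n.
split; first by move=> x y; rewrite /chplus mulr_ge0 ?mulr_ge0 ?invr_ge0 ?ler0n.
exists (fun p => (pi p.1.1, pi p.1.2, p.2)); split; first by case=> [[a b] d] /=; rewrite !piK.
split=> u [[a b] d]; rewrite /chplus /=.
  by rewrite HW HW addbN'.
by rewrite HV HV addbN'.
Qed.

Lemma Pinv_synth (R : rcfType) n : forall i (c : chpair R), Pinv c -> Pinv (synth n i c).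
Proof.
elim: n => [//|n IH] i c Hc /=.
by case: (odd i); [apply: Pinv_minus | apply: Pinv_plus]; apply: IH.
Qed.

Lemma Zmis_ge0 (R : rcfType) (Y : finType) (W V : bool -> Y -> R) :
  (forall x y, 0 <= W x y) -> 0 <= Zmis W V.
Proof. by move=> W0; apply: sumr_ge0 => y _; rewrite mulr_ge0 ?sqrtr_ge0. Qed.

Lemma Zplus (R : rcfType) (c : chpair R) : Pinv c ->
  Zmis (cp_W (pplus c)) (cp_V (pplus c)) = Zmis (cp_W c) (cp_V c) ^+ 2.
Proof.
case: c => Y W V; rewrite /Pinv /= => -[W0 [V0 [pi [piK [HW HV]]]]].
set s := fun u y => Num.sqrt (V (~~ u) y / V u y).
have key : forall y1 y2 u, chplus W false (y1, y2, u) * Num.sqrt (LR (chplus V) (y1, y2, u))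
   = 2^-1 * (W u y1 * s u y1) * (W false y2 * s false y2).
  move=> y1 y2 u; rewrite /chplus /LR /s /= addbF addbT.
  have -> : 2^-1 * V (~~ u) y1 * V true y2 / (2^-1 * V u y1 * V false y2)
       = (V (~~ u) y1 / V u y1) * (V true y2 / V false y2).
    rewrite !invfM.
    have h2 : (2^-1 : R) * (2^-1)^-1 = 1 by rewrite mulfV // invr_eq0 pnatr_eq0.
    transitivity ((2^-1 * (2^-1)^-1) * (V (~~ u) y1 / V u y1 * (V true y2 / V false y2))).
      by ring.
    by rewrite h2 mul1r.
  by rewrite sqrtrM ?divr_ge0 //; ring.
rewrite /Zmis.
transitivity (\sum_(p : (Y * Y * bool)%type) 2^-1 * (W p.2 p.1.1 * s p.2 p.1.1) * (W false p.1.2 * s false p.1.2)).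
  by apply: eq_bigr => -[[y1 y2] u] _; exact: key.
rewrite -(pair_big xpredT xpredT (fun (yy : Y * Y) u => 2^-1 * (W u yy.1 * s u yy.1) * (W false yy.2 * s false yy.2))) /=.
rewrite -(pair_big xpredT xpredT (fun y1 y2 => \sum_(u : bool) 2^-1 * (W u y1 * s u y1) * (W false y2 * s false y2))) /=.
have Htrue : \sum_(y : Y) W true y * s true y = \sum_(y : Y) W false y * Num.sqrt (LR V y).
  rewrite (reindex_inj (can_inj piK)) /=; apply: eq_bigr => y _.
  by rewrite /s /LR /= HW HV HV.
have Hfalse : \sum_(y : Y) W false y * s false y = \sum_(y : Y) W false y * Num.sqrt (LR V y) by [].
set Z := \sum_(y : Y) W false y * Num.sqrt (LR V y).
transitivity (\sum_(y1 : Y) \sum_(y2 : Y) (2^-1 * \sum_(u : bool) (W u y1 * s u y1)) * (W false y2 * s false y2)).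
  apply: eq_bigr => y1 _; apply: eq_bigr => y2 _.
  by rewrite -mulr_suml -mulr_sumr.
rewrite -big_distrlr /= -mulr_sumr exchange_big /= big_bool /= Htrue Hfalse.
have h : (2^-1 : R) * 2 = 1 by rewrite mulVf // pnatr_eq0.
rewrite -/Z; transitivity ((2^-1 * 2) * Z ^+ 2); first by ring.
by rewrite h mul1r.
Qed.

Theorem mainTheorem11 (R : rcfType) (Y : finType) (W V : bool -> Y -> R) :
  is_BDMC W -> is_BDMC V -> sym_same_perm W V ->
  forall (n i : nat), (1 <= i <= 2 ^ n)%N ->
    ZN W V n.+1 (i.*2) = ZN W V n i ^+ 2 /\
    (ZN W V n i - ZN V V n i <= 0 -> ZN W V n.+1 (i.*2) - ZN V V n.+1 (i.*2) <= 0).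
Proof.
move=> [W0 _] [V0 _] [pi [piK [HW HV]]] n i _.
have symW : forall u y, W u (pi y) = W (~~ u) y.
  by case=> y; rewrite ?HW ?piK // -[in RHS](piK y) HW piK.
have symV : forall u y, V u (pi y) = V (~~ u) y.
  by case=> y; rewrite ?HV ?piK // -[in RHS](piK y) HV piK.
have P1 : Pinv (ChPair W V) by split=> //; split=> //; exists pi.
have P2 : Pinv (ChPair V V) by split=> //; split=> //; exists pi.
have E : forall (c : chpair R), Pinv c -> ZN (cp_W c) (cp_V c) n.+1 i.*2 = ZN (cp_W c) (cp_V c) n i ^+ 2.
  move=> [Y' W' V'] Pc; rewrite /ZN /= odd_double doubleK.
  by apply: Zplus; apply: Pinv_synth.
have EW := E _ P1; have EV := E _ P2; rewrite /= in EW EV.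
split=> //; rewrite EW EV !subr_le0 => H.
have [A0 [B0 _]] := Pinv_synth n i P2.
have [A1 _] := Pinv_synth n i P1.
rewrite ler_pXn2r // nnegrE.
- exact: (Zmis_ge0 _ A1).
- exact: (Zmis_ge0 _ A0).
Qed.
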